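(* Let $M\ge2$ and let $J_1,\dots,J_{M-1}$, $\mu_1,\dots,\mu_M$, $h_1^z,\dots,h_M^z$ be real numbers. On the open chain of $M$ sites consider $$H=\sum_{m=1}^{M-1}\Big(J_m c_{m+1}^\dagger c_m\sigma_{m+1}^+ + \text{h.c.}\Big)+\sum_{m=1}^{M}\mu_m c_m^\dagger c_m+\sum_{m=1}^M h_m^z\sigma_m^z.$$ For every number $\alpha$, the operator $$Q^{(\exp)}(\alpha)=\sum_{m=1}^{M}\Big[\alpha^m c_m^\dagger c_m+\alpha^{m-1}(1-\alpha)\frac{\sigma_m^z+1}{2}\Big]$$ commutes with $H$.
   Context: Each site $m$ carries one spinless fermion mode ($c_m,c_m^\dagger$, canonical anticommutation relations) and one spin-$1/2$ with Pauli matrices $\sigma_m^{x,y,z}$; $\sigma_m^{\pm}=\sigma_m^x\pm i\sigma_m^y$, so that $\sigma_m^+$ raises $\sigma_m^z$. *)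

(* Defs.v *)
(* Concrete model: M sites, each site carries a fermion mode
   and a spin-1/2; Hilbert space = span of basis states s : 'I_M -> bool*bool
   (fst = fermion occupation, snd = spin up).  Fermions via Jordan-Wigner.
   Sites are 0-based: site m (0 <= m < M) is site m+1 of the paper. *)
From mathcomp Require Import all_boot all_order all_algebra.
Set Implicit Arguments. Unset Strict Implicit. Unset Printing Implicit Defensive.
Import GRing.Theory Num.Theory.
Local Open Scope ring_scope.

Definition state (M : nat) := {ffun 'I_M -> bool * bool}.

Definition op (C : numClosedFieldType) (M : nat) := 'M[C]_(#|{: state M}|).

Definition mkop (C : numClosedFieldType) (M : nat)
  (f : state M -> state M -> C) : op C M :=
  \matrix_(i, j) f (enum_val i) (enum_val j).

Definition adj (C : numClosedFieldType) (M : nat) (A : op C M) : op C M :=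
  map_mx Num.conj (A^T).

Definition occ M (s : state M) (m : nat) : bool :=
  [exists k : 'I_M, (val k == m) && (s k).1].
Definition spn M (s : state M) (m : nat) : bool :=
  [exists k : 'I_M, (val k == m) && (s k).2].
Definition updf M (s : state M) (m : nat) (g : bool * bool -> bool * bool)
  : state M := [ffun k => if val k == m then g (s k) else s k].

Definition cop (C : numClosedFieldType) M (m : nat) : op C M :=
  mkop (fun o s =>
    if occ s m && (o == updf s m (fun p => (false, p.2)))
    then (-1) ^+ #|[set k : 'I_M | (val k < m)%N && (s k).1]|
    else 0).
Definition cdag (C : numClosedFieldType) M (m : nat) : op C M := adj (cop C M m).
Definition numop (C : numClosedFieldType) M (m : nat) : op C M :=
  cdag C M m *m cop C M m.

(* sigma^z_m and sigma^+_m = sigma^x_m + i sigma^y_m = 2 |up><down| *)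
Definition sigz (C : numClosedFieldType) M (m : nat) : op C M :=
  mkop (fun o s => if o == s then (if spn s m then 1 else -1) else 0).
Definition sigp (C : numClosedFieldType) M (m : nat) : op C M :=
  mkop (fun o s =>
    if ~~ spn s m && (o == updf s m (fun p => (p.1, true))) then 2 else 0).

Definition hop (C : numClosedFieldType) M (J : nat -> C) (m : nat) : op C M :=
  J m *: (cdag C M m.+1 *m cop C M m *m sigp C M m.+1).

Definition Ham (C : numClosedFieldType) M (J mu hz : nat -> C) : op C M :=
  \sum_(i < M.-1) (hop M J i + adj (hop M J i))
  + \sum_(m < M) (mu m *: numop C M m)
  + \sum_(m < M) (hz m *: sigz C M m).

(* Q^(exp)(alpha); paper site m+1 gives alpha^(m+1) and alpha^m *)
Definition Qexp (C : numClosedFieldType) M (alpha : C) : op C M :=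
  \sum_(m < M) (alpha ^+ m.+1 *: numop C M m
     + (alpha ^+ m * (1 - alpha) / 2) *: (sigz C M m + 1%:M)).

(* Main.v *)
Require Import Defs.
From mathcomp Require Import all_boot all_order all_algebra.
From mathcomp Require Import ring.
Import GRing.Theory Num.Theory.
Local Open Scope ring_scope.
Set Implicit Arguments. Unset Strict Implicit.

Section Proof.
Variables (C : numClosedFieldType) (M : nat) (alpha : C).

Definition term (k : nat) (p : bool * bool) : C :=
  (if p.1 then alpha ^+ k.+1 else 0) + (if p.2 then alpha ^+ k * (1 - alpha) else 0).

Definition qf (s : state M) : C := \sum_(k : 'I_M) term k (s k).

Lemma qf_upd s (k0 : 'I_M) g :
  qf (updf s k0 g) = qf s - term k0 (s k0) + term k0 (g (s k0)).
Proof.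
rewrite /qf (bigD1 k0) //= [in RHS](bigD1 k0) //= ffunE eqxx.
have -> : \sum_(i | i != k0) term i (updf s k0 g i) = \sum_(i | i != k0) term i (s i).
  apply: eq_bigr => i hi; rewrite ffunE.
  suff -> : (val i == val k0) = false by [].
  by apply/negbTE; rewrite val_eqE.
ring.
Qed.

Lemma occ_ord (s : state M) (k : 'I_M) : occ s k = (s k).1.
Proof.
apply/existsP/idP => [[k' /andP[/eqP e h]]|h].
  by have -> : k = k' by apply: val_inj.
by exists k; rewrite eqxx.
Qed.

Lemma spn_ord (s : state M) (k : 'I_M) : spn s k = (s k).2.
Proof.
apply/existsP/idP => [[k' /andP[/eqP e h]]|h].
  by have -> : k = k' by apply: val_inj.
by exists k; rewrite eqxx.
Qed.

Lemma occ_ex (s : state M) m : occ s m -> exists k : 'I_M, val k = m.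
Proof. by case/existsP => k /andP[/eqP e _]; exists k. Qed.

Definition shifts (A : op C M) (d : C) :=
  forall i j, A i j != 0 -> qf (enum_val i) = qf (enum_val j) + d.

Lemma shifts_mul A B d1 d2 : shifts A d1 -> shifts B d2 -> shifts (A *m B) (d1 + d2).
Proof.
move=> hA hB i j; rewrite mxE.
case: (pickP (fun k => A i k * B k j != 0)) => [k|H0].
  rewrite mulf_eq0 negb_or => /andP[h1 h2] _.
  rewrite (hA _ _ h1) (hB _ _ h2); ring.
rewrite big1 ?eqxx // => k _; apply/eqP; move: (H0 k) => /= /negbFE //.
Qed.

Lemma shifts_add A B d : shifts A d -> shifts B d -> shifts (A + B) d.
Proof.
move=> hA hB i j; rewrite mxE.
case: (eqVneq (A i j) 0) => [->|h _]; last exact: hA.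
by rewrite add0r; apply: hB.
Qed.

Lemma shifts0 d : shifts 0 d.
Proof. by move=> i j; rewrite mxE eqxx. Qed.

Lemma shifts_sum n (F : 'I_n -> op C M) d :
  (forall i, shifts (F i) d) -> shifts (\sum_(i < n) F i) d.
Proof.
move=> h; apply: (big_ind (fun A => shifts A d)) => //.
  exact: shifts0.
move=> A B; exact: shifts_add.
Qed.

Lemma shifts_scale A a d : shifts A d -> shifts (a *: A) d.
Proof. by move=> h i j; rewrite mxE mulf_eq0 negb_or => /andP[_]; apply: h. Qed.

Lemma shifts_adj A d : shifts A d -> shifts (adj A) (- d).
Proof.
move=> h i j; rewrite /adj !mxE conjC_eq0 => /h ->.
by rewrite addrK.
Qed.

Lemma shifts_eq A d d' : shifts A d -> d = d' -> shifts A d'.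
Proof. by move=> h <-. Qed.

Lemma shifts_cop m : shifts (cop C M m) (- alpha ^+ m.+1).
Proof.
move=> i j; rewrite mxE.
case: ifP => [/andP[ho /eqP e] _|]; last by rewrite eqxx.
have [k0 hk] := occ_ex ho.
rewrite e -hk qf_upd; move: ho; rewrite -hk occ_ord.
case: (enum_val j k0) => [[] b] //= _.
rewrite /term /=; case: b; ring.
Qed.

Lemma shifts_cdag m : shifts (cdag C M m) (alpha ^+ m.+1).
Proof. by rewrite /cdag; have := shifts_adj (shifts_cop (m:=m)); rewrite opprK. Qed.

Lemma shifts_sigz m : shifts (sigz C M m) 0.
Proof.
move=> i j; rewrite mxE; case: (eqVneq (enum_val i) (enum_val j)) => [->|_]; first by rewrite addr0.
by rewrite eqxx.
Qed.

Lemma shifts_sigp m : (m < M)%N -> shifts (sigp C M m) (alpha ^+ m * (1 - alpha)).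
Proof.
move=> hm i j; rewrite mxE.
case: ifP => [/andP[ho /eqP e] _|]; last by rewrite eqxx.
rewrite e (qf_upd _ (Ordinal hm)); move: ho; rewrite -[m]/(nat_of_ord (Ordinal hm)) spn_ord.
case: (enum_val j (Ordinal hm)) => [a []] //= _.
rewrite /term /=; case: a; ring.
Qed.

Lemma shifts_hop (J : nat -> C) m : (m < M.-1)%N -> shifts (hop M J m) 0.
Proof.
move=> hm; apply: shifts_scale.
have hm1 : (m.+1 < M)%N by move: hm; case: M.
have h := (shifts_mul (shifts_mul (shifts_cdag (m:=m.+1)) (shifts_cop (m:=m))) (shifts_sigp hm1)).
have e : alpha ^+ m.+2 - alpha ^+ m.+1 + alpha ^+ m.+1 * (1 - alpha) = 0 by rewrite !exprS; ring.
by rewrite e in h. Qed.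

Lemma shifts_Ham (J mu hz : nat -> C) : (2 <= M)%N -> shifts (Ham M J mu hz) 0.
Proof.
move=> hM; rewrite /Ham; apply: shifts_add; first apply: shifts_add.
- apply: shifts_sum => i; apply: shifts_add; first exact: shifts_hop.
  by have := shifts_adj (shifts_hop (J:=J) (ltn_ord i)); rewrite oppr0.
- apply: shifts_sum => i; apply: shifts_scale.
  by have := shifts_mul (shifts_cdag (m:=i)) (shifts_cop (m:=i)); rewrite addrN.
- by apply: shifts_sum => i; apply: shifts_scale; apply: shifts_sigz.
Qed.

Definition qrow : 'rV[C]_(#|{: state M}|) := \row_i qf (enum_val i).

Lemma shifts_comm A : shifts A 0 -> A *m diag_mx qrow = diag_mx qrow *m A.
Proof.
move=> h; rewrite mul_mx_diag mul_diag_mx; apply/matrixP => i j; rewrite !mxE.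
case: (eqVneq (A i j) 0) => [->|/h ->]; first by rewrite mul0r mulr0.
by rewrite addr0 mulrC.
Qed.

Lemma upd_inj (s s' : state M) m :
  occ s m -> occ s' m ->
  updf s m (fun p => (false, p.2)) = updf s' m (fun p => (false, p.2)) -> s = s'.
Proof.
move=> hs hs' e; have [k0 hk] := occ_ex hs.
apply/ffunP => k; have := congr1 (fun f : state M => f k) e; rewrite !ffunE.
case: eqP => [ek|_] //.
have kk : k = k0 by apply: val_inj; rewrite /= ek hk.
subst k; move: hs hs'; rewrite -hk !occ_ord.
by case: (s k0) (s' k0) => [a b] [a' b'] /= -> -> [->].
Qed.

Lemma numop_entry m i j :
  numop C M m i j = if (i == j) && occ (enum_val i) m then 1 else 0.
Proof.
rewrite /numop /cdag mxE.
case hi: (occ (enum_val i) m); last first.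
  rewrite andbF big1 // => k _; rewrite /adj !mxE hi /=.
  by rewrite rmorph0 mul0r.
rewrite andbT (bigD1 (enum_rank (updf (enum_val i) m (fun p => (false, p.2))))) //=.
rewrite big1 ?addr0; last first.
  move=> k hk; rewrite /adj !mxE hi /=.
  case: eqP => [e|_]; last by rewrite rmorph0 mul0r.
  by move: hk; rewrite -e enum_valK eqxx.
rewrite /adj !mxE enum_rankK hi eqxx /=.
case: (eqVneq i j) => [<-|nij].
  by rewrite hi eqxx /= rmorphXn rmorphN1 -exprMn mulrNN mulr1 expr1n.
case: ifP => [/andP[hj /eqP e]|]; last by rewrite mulr0.
by case/eqP: nij; apply: enum_val_inj; apply: upd_inj hi hj e.
Qed.

Lemma qentry (m : 'I_M) i j :
  (alpha ^+ m.+1 *: numop C M m + (alpha ^+ m * (1 - alpha) / 2) *: (sigz C M m + 1%:M)) i j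
  = if i == j then term m (enum_val i m) else 0.
Proof.
rewrite mxE mxE numop_entry !mxE.
case: (eqVneq i j) => [<-|nij] /=; last first.
  by rewrite (inj_eq enum_val_inj) (negbTE nij) mulr0 !add0r mulr0.
rewrite !eqxx /= occ_ord spn_ord /term.
have h2 : (2 : C) != 0 by rewrite pnatr_eq0.
case: (enum_val i m) => [[] []] /=; rewrite ?mulr0 ?mulr1 ?add0r ?addr0 ?addNr ?mulr0; try field => //.
Qed.

Lemma Qexp_diag : Qexp M alpha = diag_mx qrow.
Proof.
apply/matrixP => i j; rewrite /Qexp summxE [RHS]mxE.
under eq_bigr => m _ do rewrite qentry.
case: (eqVneq i j) => [->|nij]; last first.
  by rewrite mulr0n big1 // => m _; rewrite (negbTE nij).
rewrite mulr1n mxE /qf; by apply: eq_bigr.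
Qed.

End Proof.

Theorem mainTheorem6 (C : numClosedFieldType) (M : nat) (J mu hz : nat -> C)
  (alpha : C) :
  (2 <= M)%N ->
  (forall m, (m < M.-1)%N -> J m \is Num.real) ->
  (forall m, (m < M)%N -> mu m \is Num.real) ->
  (forall m, (m < M)%N -> hz m \is Num.real) ->
  Ham M J mu hz *m Qexp M alpha = Qexp M alpha *m Ham M J mu hz.
Proof.
move=> hM _ _ _; rewrite (Qexp_diag M alpha).
exact: (shifts_comm (@shifts_Ham C M alpha J mu hz hM)).
Qed.
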